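(* Let $n_u<n$, $n_b=n-n_u$, $\mathbf{A}\in\mathbb{R}^{n_u\times n_b}$, $\mathbf{C}=[\mathbf{I}_{n_u}\;\;-\mathbf{A}]$. For $j=1,\dots,p$ ($p\ge2$) let $\mathbf{L}_j\in\{0,1\}^{n_j\times n}$ be selection matrices (rows are distinct rows of $\mathbf{I}_n$) such that every variable $i\in\{1,\dots,n\}$ is selected by at least one $\mathbf{L}_j$; let $m=\sum_j n_j$ and $\mathbf{K}=[\mathbf{L}_1^\top\cdots\mathbf{L}_p^\top]^\top\in\{0,1\}^{m\times n}$. Let $\mathbf{y}$ be a random vector in $\mathbb{R}^n$ with $\mathbf{C}\mathbf{y}=\mathbf{0}$ and mean $\boldsymbol{\mu}=E(\mathbf{y})$, and let the base forecasts satisfy $\widehat{\mathbf{y}}=\mathbf{K}\mathbf{y}+\boldsymbol{\varepsilon}$, where $\boldsymbol{\varepsilon}=[\boldsymbol{\varepsilon}^{1\top}\cdots\boldsymbol{\varepsilon}^{p\top}]^\top$, $\boldsymbol{\varepsilon}^j\in\mathbb{R}^{n_j}$, is a random vector with $E(\boldsymbol{\varepsilon})=\mathbf{0}$ and $E(\boldsymbol{\varepsilon}\boldsymbol{\varepsilon}^\top)=\mathbf{W}$ positive definite, with $(j,j)$ diagonal block $\mathbf{W}_j=E(\boldsymbol{\varepsilon}^j\boldsymbol{\varepsilon}^{j\top})\in\mathbb{R}^{n_j\times n_j}$. Define $\mathbf{W}_c=(\mathbf{K}^\top\mathbf{W}^{-1}\mathbf{K})^{-1}$, $\boldsymbol{\Omega}=\mathbf{W}^{-1}\mathbf{K}\mathbf{W}_c$,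 $\mathbf{M}=\mathbf{I}_n-\mathbf{W}_c\mathbf{C}^\top(\mathbf{C}\mathbf{W}_c\mathbf{C}^\top)^{-1}\mathbf{C}$ and $\widetilde{\mathbf{y}}^c=\mathbf{M}\boldsymbol{\Omega}^\top\widehat{\mathbf{y}}$. Then $E(\widetilde{\mathbf{y}}^c)=\boldsymbol{\mu}$, the error covariance matrix is $$\widetilde{\mathbf{W}}_c=E\big[(\widetilde{\mathbf{y}}^c-\mathbf{y})(\widetilde{\mathbf{y}}^c-\mathbf{y})^\top\big]=\mathbf{M}\mathbf{W}_c,$$ and for every $j=1,\dots,p$, $$\mathbf{L}_j\widetilde{\mathbf{W}}_c\mathbf{L}_j^\top\preceq\mathbf{L}_j\mathbf{W}_c\mathbf{L}_j^\top\preceq\mathbf{W}_j,$$ where $\preceq$ denotes the Loewner (positive semidefinite) order.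
   Context: $\widetilde{\mathbf{y}}^c$ is the optimal linear coherent combined forecast obtained by minimizing $(\widehat{\mathbf{y}}-\mathbf{K}\mathbf{y})^\top\mathbf{W}^{-1}(\widehat{\mathbf{y}}-\mathbf{K}\mathbf{y})$ subject to $\mathbf{C}\mathbf{y}=\mathbf{0}$. $\mathbf{X}\preceq\mathbf{Y}$ means $\mathbf{Y}-\mathbf{X}$ is positive semidefinite. *)

(* Defs.v *)
From HB Require Import structures.
From mathcomp Require Import all_boot all_order all_algebra.
From mathcomp Require Import all_classical all_reals all_analysis.
Set Implicit Arguments. Unset Strict Implicit. Unset Printing Implicit Defensive.
Import Order.TTheory GRing.Theory Num.Theory.
Local Open Scope ring_scope.

Definition psdmx (R : realFieldType) (k : nat) (X : 'M[R]_k) : Prop :=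
  X^T = X /\ forall x : 'cV[R]_k, 0 <= (x^T *m X *m x) 0 0.

Definition pdmx (R : realFieldType) (k : nat) (X : 'M[R]_k) : Prop :=
  X^T = X /\ forall x : 'cV[R]_k, x != 0 -> 0 < (x^T *m X *m x) 0 0.

Definition loewner_le (R : realFieldType) (k : nat) (X Y : 'M[R]_k) : Prop :=
  psdmx (Y - X).

Definition selection_mx (R : ringType) (k n : nat) (L : 'M[R]_(k, n)) : Prop :=
  exists s : 'I_k -> 'I_n, injective s /\
    L = \matrix_(r < k, c < n) ((c == s r)%:R : R).

Definition Emx d (T : measurableType d) (R : realType) (P : probability T R)
  (a b : nat) (X : T -> 'M[R]_(a, b)) : 'M[R]_(a, b) :=
  \matrix_(i < a, j < b) fine ('E_P[fun t => X t i j])%E.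

Definition integrable_mx d (T : measurableType d) (R : realType)
  (P : probability T R) (a b : nat) (X : T -> 'M[R]_(a, b)) : Prop :=
  forall i j, P.-integrable setT (fun t => (X t i j)%:E).

(* Main.v *)
Require Import Defs.
From HB Require Import structures.
From mathcomp Require Import all_boot all_order all_algebra.
From mathcomp Require Import all_classical all_reals all_analysis.
Import Order.TTheory GRing.Theory Num.Theory.
Local Open Scope ring_scope.

Set Implicit Arguments. Unset Strict Implicit.
Section Alg.
Context (R : realFieldType).

Lemma pd_inj k (X : 'M[R]_k) : pdmx X -> forall u : 'rV_k, u *m X = 0 -> u = 0.
Proof.
move=> [_ hX] u hu; apply/eqP; apply: contraT => hu0.
have : u^T != 0 by apply: contra hu0 => /eqP h; rewrite -(trmxK u) h trmx0.
move=> /hX; rewrite trmxK hu mul0mx mxE ltxx //.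
Qed.

Lemma pd_unit k (X : 'M[R]_k) : pdmx X -> X \in unitmx.
Proof.
move=> hX; rewrite -row_free_unit -kermx_eq0; apply/eqP/matrixP => i j.
have h : row i (kermx X) *m X = 0 by rewrite -row_mul mulmx_ker row0.
by have := congr1 (fun v : 'rV_k => v 0 j) (pd_inj hX h); rewrite !mxE.
Qed.

Lemma pd_psd k (X : 'M[R]_k) : pdmx X -> psdmx X.
Proof.
move=> [hs hX]; split => // x; have [->|/hX/ltW //] := eqVneq x 0.
by rewrite mulmx0 mxE.
Qed.

Lemma sym_inv k (X : 'M[R]_k) : X^T = X -> (invmx X)^T = invmx X.
Proof. by move=> h; rewrite trmx_inv h. Qed.

Lemma pd_inv k (X : 'M[R]_k) : pdmx X -> pdmx (invmx X).
Proof.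
move=> hX; have hu := pd_unit hX; have [hs hp] := hX.
split; first exact: sym_inv.
move=> x hx; set z := invmx X *m x.
have hxz : x = X *m z by rewrite /z mulKVmx.
have hz : z != 0 by apply: contra hx => /eqP h; rewrite hxz h mulmx0.
have := hp z hz; congr (0 < _ _ _).
clearbody z; rewrite hxz trmx_mul hs -!mulmxA mulKVmx //.
Qed.

Lemma psd_congr k l (X : 'M[R]_k) (B : 'M[R]_(l, k)) : psdmx X -> psdmx (B *m X *m B^T).
Proof.
move=> [hs hp]; split; first by rewrite !trmx_mul trmxK hs mulmxA.
move=> x; have := hp (B^T *m x); congr (0 <= _ _ _).
by rewrite trmx_mul trmxK !mulmxA.
Qed.

Lemma pd_congr k l (X : 'M[R]_k) (B : 'M[R]_(k, l)) : pdmx X ->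
  (forall x : 'cV_l, B *m x = 0 -> x = 0) -> pdmx (B^T *m X *m B).
Proof.
move=> [hs hp] hB; split; first by rewrite !trmx_mul trmxK hs mulmxA.
move=> x hx; have hBx : B *m x != 0 by apply: contra hx => /eqP /hB ->.
have := hp _ hBx; congr (0 < _ _ _).
by rewrite trmx_mul !mulmxA.
Qed.


End Alg.
Section Lin.
Context (R : realType) (d : measure_display) (T : measurableType d) (P : probability T R).

Lemma lincomb (I : finType) (c : I -> R) (f : I -> T -> R) :
  (forall i, P.-integrable setT (fun t => (f i t)%:E)) ->
  P.-integrable setT (fun t => (\sum_i c i * f i t)%:E) /\
  fine ('E_P[fun t => (\sum_i c i * f i t)%R])%E = \sum_i c i * fine ('E_P[f i])%E.
Proof.
move=> hf.
have eqf : (fun t => ((\sum_i c i * f i t)%R)%:E) = (fun t => \sum_i ((c i)%:E * (f i t)%:E))%E.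
  by apply: funext => t; rewrite -sumEFin.
have hi : forall i, P.-integrable setT (fun t => ((c i)%:E * (f i t)%:E)%E).
  by move=> i; apply: integrableZl => //; apply: hf.
split; first by rewrite eqf; apply: integrable_sum => // i _; apply: hi.
rewrite unlock eqf integral_sum //.
under eq_bigr => i _ do rewrite integralZl // -[X in (_ * X)%E]fineK ?integrable_fin_num //.
by rewrite sumEFin.
Qed.

Lemma Emx_mull (a b c : nat) (B : 'M[R]_(c, a)) (X : T -> 'M[R]_(a, b)) :
  integrable_mx P X ->
  integrable_mx P (fun t => B *m X t) /\ Emx P (fun t => B *m X t) = B *m Emx P X.
Proof.
move=> hX.
have h i j := @lincomb _ (fun k => B i k) (fun k t => X t k j) (fun k => hX k j).
split.
  move=> i j; have [h1 _] := h i j.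
  by apply: eq_integrable h1 => // t _; rewrite mxE.
apply/matrixP => i j; rewrite !mxE.
have [_ h2] := h i j.
rewrite [RHS](_ : _ = \sum_k B i k * fine ('E_P[fun t => X t k j])%E); last first.
  by apply: eq_bigr => k _; rewrite mxE.
rewrite -h2; congr (fine _); congr ('E_P[_])%E; apply: funext => t.
by rewrite mxE.
Qed.

Lemma Emx_mulr (a b c : nat) (D : 'M[R]_(b, c)) (X : T -> 'M[R]_(a, b)) :
  integrable_mx P X ->
  integrable_mx P (fun t => X t *m D) /\ Emx P (fun t => X t *m D) = Emx P X *m D.
Proof.
move=> hX.
have h i j := @lincomb _ (fun k => D k j) (fun k t => X t i k) (fun k => hX i k).
split.
  move=> i j; have [h1 _] := h i j.
  by apply: eq_integrable h1 => // t _; rewrite mxE; congr (_%:E); apply: eq_bigr => k _; rewrite mulrC.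
apply/matrixP => i j; rewrite !mxE.
have [_ h2] := h i j.
rewrite [RHS](_ : _ = \sum_k D k j * fine ('E_P[fun t => X t i k])%E); last first.
  by apply: eq_bigr => k _; rewrite mxE mulrC.
rewrite -h2; congr (fine _); congr ('E_P[_])%E; apply: funext => t.
by rewrite mxE; apply: eq_bigr => k _; rewrite mulrC.
Qed.

Lemma Emx_add (a b : nat) (X Y : T -> 'M[R]_(a, b)) :
  integrable_mx P X -> integrable_mx P Y ->
  integrable_mx P (fun t => X t + Y t) /\ Emx P (fun t => X t + Y t) = Emx P X + Emx P Y.
Proof.
move=> hX hY.
have h i j := @lincomb _ (fun _ : bool => 1) (fun (k : bool) t => if k then X t i j else Y t i j)
   (fun k => if k as k return P.-integrable setT (fun t => ((if k then X t i j else Y t i j))%:E) then hX i j else hY i j).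
split.
  move=> i j; have [h1 _] := h i j.
  by apply: eq_integrable h1 => // t _; rewrite mxE big_bool /= !mul1r.
apply/matrixP => i j; rewrite !mxE.
have [_ h2] := h i j.
move: h2; rewrite big_bool /= !mul1r => <-.
congr (fine _); congr ('E_P[_])%E; apply: funext => t.
by rewrite mxE big_bool /= !mul1r.
Qed.

End Lin.

Unset Implicit Arguments.
Theorem corollary1 (R : realType) (d : measure_display) (T : measurableType d)
  (P : probability T R) (nu nb : nat)
  (A : 'M[R]_(nu, nb)) (p : nat) (nj : 'I_p -> nat)
  (L : forall j : 'I_p, 'M[R]_(nj j, nu + nb))
  (y : T -> 'cV[R]_(nu + nb)) (eps : T -> 'cV[R]_(\sum_(j < p) nj j))
  (W : 'M[R]_(\sum_(j < p) nj j)) :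
  (nu < nu + nb)%N ->
  (1 < p)%N ->
  (forall j, selection_mx (L j)) ->
  (forall i : 'I_(nu + nb), exists j : 'I_p, exists r : 'I_(nj j), L j r i != 0) ->
  let C : 'M[R]_(nu, nu + nb) := row_mx 1%:M (- A) in
  let K : 'M[R]_(\sum_(j < p) nj j, nu + nb) := \mxcol_(j < p) L j in
  (forall t, C *m y t = 0) ->
  integrable_mx P y ->
  integrable_mx P eps ->
  integrable_mx P (fun t => eps t *m (eps t)^T) ->
  Emx P eps = 0 ->
  Emx P (fun t => eps t *m (eps t)^T) = W ->
  pdmx W ->
  let mu := Emx P y in
  let yhat := fun t => K *m y t + eps t in
  let Wc := invmx (K^T *m invmx W *m K) in
  let Omega := invmx W *m K *m Wc in
  let M := 1%:M - Wc *m C^T *m invmx (C *m Wc *m C^T) *m C in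
  let yc := fun t => M *m Omega^T *m yhat t in
  let Wtc := Emx P (fun t => (yc t - y t) *m (yc t - y t)^T) in
  [/\ integrable_mx P yc /\ Emx P yc = mu,
      integrable_mx P (fun t => (yc t - y t) *m (yc t - y t)^T) /\ Wtc = M *m Wc &
      forall j : 'I_p,
        loewner_le (L j *m Wtc *m (L j)^T) (L j *m Wc *m (L j)^T) /\
        loewner_le (L j *m Wc *m (L j)^T) (submxblock W j j)].
Proof.
move=> hn hp hsel hcov C K hCy hy heps heps2 hE0 hEW hW mu yhat Wc Omega M yc Wtc.
have Kinj : forall x : 'cV[R]_(nu + nb), K *m x = 0 -> x = 0.
  move=> x hx; apply/matrixP => i k; rewrite (ord1 k) mxE.
  have [j [r hr]] := hcov i.
  have [s [_ hs]] := hsel j.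
  have hL : L j = rowsub s 1%:M by rewrite hs; apply/matrixP => a b; rewrite !mxE eq_sym.
  have hLx : L j *m x = 0 by rewrite -(mxcolK L j) submxcol_mul hx submxcol0.
  have hi : i = s r by move: hr; rewrite hL !mxE; case: (eqVneq (s r) i) => [->//|_]; rewrite eqxx.
  have := congr1 (fun v : 'cV_(nj j) => v r 0) hLx.
  by rewrite hL mul_rowsub_mx mul1mx !mxE -hi.
have hWu : W \in unitmx := pd_unit hW.
have hWs : W^T = W := hW.1.
have hiW := pd_inv hW.
have hQ : pdmx (K^T *m invmx W *m K) := pd_congr hiW Kinj.
have hQu := pd_unit hQ.
have hWcpd : pdmx Wc := pd_inv hQ.
have hWcs : Wc^T = Wc := hWcpd.1.
have Cinj : forall x : 'cV_nu, C^T *m x = 0 -> x = 0.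
  move=> x; rewrite /C tr_row_mx trmx1 mul_col_mx mul1mx => /eqP.
  by rewrite col_mx_eq0 => /andP[/eqP -> _].
set S := C *m Wc *m C^T.
have hS : pdmx S by have := pd_congr hWcpd Cinj; rewrite trmxK.
have hSu := pd_unit hS.
have hiS := pd_inv hS.
have hSs : S^T = S := hS.1.
have OmT : Omega^T = Wc *m K^T *m invmx W.
  by rewrite /Omega !trmx_mul hWcs (sym_inv hWs) !mulmxA.
have OmK : Omega^T *m K = 1%:M.
  rewrite OmT; transitivity (Wc *m (K^T *m invmx W *m K)); first by rewrite !mulmxA.
  exact: mulVmx.
have My : forall v : 'cV_(nu + nb), C *m v = 0 -> M *m v = v.
  by move=> v hv; rewrite /M mulmxBl mul1mx -[_ *m C *m v]mulmxA hv mulmx0 subr0.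
have WOm : W *m Omega = K *m Wc by rewrite /Omega -!mulmxA mulKVmx.
have OmWOm : Omega^T *m W *m Omega = Wc by rewrite -mulmxA WOm mulmxA OmK mul1mx.
have MT : M^T = 1%:M - C^T *m invmx S *m C *m Wc.
  by rewrite /M linearB /= trmx1 !trmx_mul trmxK hWcs (sym_inv hSs) !mulmxA.
have MWcCt : M *m Wc *m C^T = 0.
  rewrite /M !mulmxBl mul1mx.
  have -> : Wc *m C^T *m invmx S *m C *m Wc *m C^T = Wc *m C^T *m (invmx S *m S) by rewrite /S !mulmxA.
  by rewrite mulVmx // mulmx1 subrr.
have MWcM : M *m Wc *m M^T = M *m Wc.
  rewrite MT mulmxBr mulmx1 !mulmxA MWcCt !mul0mx subr0 //.
have Cmu : C *m mu = 0.
  have [_ h1] := Emx_mull C hy.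
  have [_ h0] := Emx_mull (0 : 'M[R]_(nu, nu + nb)) hy.
  rewrite -h1 (_ : (fun t => C *m y t) = (fun t => 0 *m y t)); first by rewrite h0 mul0mx.
  by apply: funext => t; rewrite hCy mul0mx.
have Mmu : M *m mu = mu := My _ Cmu.
set G := M *m Omega^T.
have GK : G *m K = M by rewrite /G -mulmxA OmK mulmx1.
have ycE : yc = fun t => M *m y t + G *m eps t.
  by apply: funext => t; rewrite /yc /yhat mulmxDr mulmxA GK.
have [iy1 Ey1] := Emx_mull M hy.
have [ie1 Ee1] := Emx_mull G heps.
have [iyc Eyc] := Emx_add iy1 ie1.
have errE : (fun t => (yc t - y t) *m (yc t - y t)^T) = fun t => G *m (eps t *m (eps t)^T) *m G^T.
  apply: funext => t.
  have -> : yc t - y t = G *m eps t by rewrite ycE /= My // addrAC subrr add0r.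
  by rewrite trmx_mul !mulmxA.
have [ie2 Ee2] := Emx_mull G heps2.
have [ie3 Ee3] := Emx_mulr G^T ie2.
have Ee3' : Emx P (fun t => G *m (eps t *m (eps t)^T) *m G^T) = Emx P (fun t => G *m (eps t *m (eps t)^T)) *m G^T := Ee3.
have ie3' : integrable_mx P (fun t => G *m (eps t *m (eps t)^T) *m G^T) := ie3.
have hWtc : Wtc = M *m Wc.
  rewrite /Wtc errE Ee3' Ee2 hEW /G (trmx_mul M (Omega^T)) trmxK.
  have -> : M *m Omega^T *m W *m (Omega *m M^T) = M *m (Omega^T *m W *m Omega) *m M^T by rewrite !mulmxA.
  by rewrite OmWOm MWcM.
split.
- by rewrite ycE; split => //; rewrite Eyc Ey1 Ee1 hE0 mulmx0 addr0 Mmu.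
- by rewrite errE; split.
move=> j; split.
  rewrite /loewner_le hWtc.
  have hdiff : Wc - M *m Wc = Wc *m C^T *m invmx S *m C *m Wc.
    by rewrite /M mulmxBl mul1mx opprB addrC subrK.
  have -> : L j *m Wc *m (L j)^T - L j *m (M *m Wc) *m (L j)^T = (L j *m Wc *m C^T) *m invmx S *m (L j *m Wc *m C^T)^T.
    by rewrite -mulmxBl -mulmxBr hdiff !trmx_mul trmxK hWcs !mulmxA.
  exact: psd_congr (pd_psd hiS).
set Gj := submxcol (1%:M : 'M[R]_(\sum_(j < p) nj j)) j.
have GjK : Gj *m K = L j by rewrite /Gj submxcol_mul mul1mx mxcolK.
have GjT : Gj^T = submxrow (1%:M : 'M[R]_(\sum_(j < p) nj j)) j.
  by apply/matrixP => a b; rewrite !mxE eq_sym.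
have GWG : Gj *m W *m Gj^T = submxblock W j j.
  rewrite /Gj submxcol_mul mul1mx GjT /submxrow mulmx_colsub mulmx1.
  by apply/matrixP => a b; rewrite !mxE.
have e1 : Gj *m W *m Omega *m (L j)^T = L j *m Wc *m (L j)^T.
  by rewrite -(mulmxA Gj W Omega) WOm mulmxA GjK.
have e2 : L j *m Omega^T *m W *m Gj^T = L j *m Wc *m (L j)^T.
  by have := congr1 trmx e1; rewrite !trmx_mul !trmxK hWs hWcs !mulmxA.
have e3 : L j *m Omega^T *m W *m Omega *m (L j)^T = L j *m Wc *m (L j)^T.
  have : L j *m (Omega^T *m W *m Omega) *m (L j)^T = L j *m Wc *m (L j)^T by rewrite OmWOm.
  by rewrite !mulmxA.
rewrite /loewner_le; clearbody Omega.
have -> : submxblock W j j - L j *m Wc *m (L j)^T = (Gj - L j *m Omega^T) *m W *m (Gj - L j *m Omega^T)^T.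
  rewrite linearB /= (trmx_mul (L j) (Omega^T)) trmxK !mulmxBl !mulmxBr !mulmxA e1 e2 e3 GWG.
  by rewrite subrr subr0.
exact: psd_congr (pd_psd hW).
Qed.
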